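(* Let $R>0$, $n\in\mathbb N$, $Q,K,V\in\mathbb R^{k\times d}$, $A:=K^\top Q/\sqrt k$. Let $f^m$ be masked self-attention and $F^m$ mean-field masked self-attention with parameters $(A,V)$. Then $$\mathrm{Lip}^{\|\cdot\|_F}\big(f^m_{|B_R^n}\big)\le\mathrm{Lip}^{d_2}\big(F^m_{|\mathcal P([0,1]\times B_R)}\big).$$
   Context: Masked self-attention: for $X=(x_1,\dots,x_n)\in(\mathbb R^d)^n$, $f^m(X)_i=V\sum_{j=1}^iP_{ij}x_j$ with $P_{ij}=\exp(x_i^\top A^\top x_j)/\sum_{l=1}^i\exp(x_i^\top A^\top x_l)$ for $j\le i$. $\mathrm{Lip}^{\|\cdot\|_F}(f^m_{|\mathcal X})=\sup_{X\ne Y\in\mathcal X}\|f^m(X)-f^m(Y)\|_F/\|X-Y\|_F$ with Frobenius norm $\|X\|_F=(\sum_i|x_i|^2)^{1/2}$. $B_R\subset\mathbb R^d$ is the closed ball of center 0, radius $R$. Mean-field masked self-attention: for a compactly supported probability measure $\bar\mu$ on $[0,1]\times\mathbb R^d$, $F^m(\bar\mu):=(\Gamma_{\bar\mu})_\sharp\bar\mu$ (pushforward), where $\Gamma_{\bar\mu}(s,x)=\Big(s,\dfrac{\int\exp(x^\top A^\top y)Vy\mathbf 1_{\tau\le s}d\bar\mu(\tau,y)}{\int\exp(x^\top A^\top y)\mathbf 1_{\tau\le s}d\bar\mu(\tau,y)}\Big)$. Distance $d_p$ ($p\ge1$): if $\bar\mu,\bar\nu$ have the same first marginal $\theta$ on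 $[0,1]$, disintegrate $d\bar\mu(\tau,x)=d\theta(\tau)d\mu^\tau(x)$, $d\bar\nu(\tau,x)=d\theta(\tau)d\nu^\tau(x)$ and set $d_p(\bar\mu,\bar\nu)=\big(\int_0^1W_p(\mu^\tau,\nu^\tau)^pd\theta(\tau)\big)^{1/p}$, where $W_p$ is the $p$-Wasserstein distance; otherwise $d_p(\bar\mu,\bar\nu)=+\infty$. $\mathcal P([0,1]\times B_R)$ is the set of probability measures supported in $[0,1]\times B_R$, and $\mathrm{Lip}^{d_2}(F^m_{|\mathcal X})$ is the supremum of $d_2(F^m(\bar\mu),F^m(\bar\nu))/d_2(\bar\mu,\bar\nu)$ over pairs $\bar\mu\ne\bar\nu$ in $\mathcal X$ with the same first marginal. *)

(* Defs.v *)
From HB Require Import structures.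
From mathcomp Require Import all_boot all_order all_algebra.
From mathcomp Require Import all_classical all_reals all_analysis measurable_realfun.
Set Implicit Arguments. Unset Strict Implicit. Unset Printing Implicit Defensive.
Import Order.TTheory GRing.Theory Num.Theory.
Import numFieldNormedType.Exports.
Local Open Scope classical_set_scope.
Local Open Scope ring_scope.

Section Defs.
Context {R : realType}.

(* Vectors of R^d are d-tuples (these carry the product Borel sigma-algebra). *)
Definition vdot {d} (x y : d.-tuple R) : R := \sum_(i < d) tnth x i * tnth y i.
Definition vnorm {d} (x : d.-tuple R) : R := Num.sqrt (vdot x x).
Definition vsub {d} (x y : d.-tuple R) : d.-tuple R :=
  [tuple tnth x i - tnth y i | i < d].
Definition mxapp {m d} (M : 'M[R]_(m, d)) (x : d.-tuple R) : m.-tuple R :=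
  [tuple \sum_(j < d) M i j * tnth x j | i < m].

Definition attnA {k d} (Q K : 'M[R]_(k, d)) : 'M[R]_d :=
  (Num.sqrt (k%:R))^-1 *: (K^T *m Q).

Definition cball {d} (r : R) : set (d.-tuple R) := [set x | vnorm x <= r].

(* x_i^T A^T x_j = (A x_i) . x_j *)
Definition mask_weight {n d} (A : 'M[R]_d) (X : 'I_n -> d.-tuple R) (i j : 'I_n) : R :=
  expR (vdot (mxapp A (X i)) (X j)) /
  \sum_(l < n | (l <= i)%N) expR (vdot (mxapp A (X i)) (X l)).

Definition masked_sa {n d k} (A : 'M[R]_d) (V : 'M[R]_(k, d))
    (X : 'I_n -> d.-tuple R) : 'I_n -> k.-tuple R :=
  fun i => mxapp V [tuple \sum_(j < n | (j <= i)%N) mask_weight A X i j * tnth (X j) c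
                   | c < d].

Definition frob {n d} (X : 'I_n -> d.-tuple R) : R :=
  Num.sqrt (\sum_(i < n) vdot (X i) (X i)).

Definition Lip_frob {n d k} (f : ('I_n -> d.-tuple R) -> ('I_n -> k.-tuple R))
    (S : set ('I_n -> d.-tuple R)) : \bar R :=
  ereal_sup [set z | exists X Y, [/\ S X, S Y, X <> Y &
    z = (frob (fun i => vsub (f X i) (f Y i)) / frob (fun i => vsub (X i) (Y i)))%:E]].

Definition Gamma {d k} (A : 'M[R]_d) (V : 'M[R]_(k, d))
    (mu : {measure set (R * d.-tuple R)%type -> \bar R})
    (p : R * d.-tuple R) : R * k.-tuple R :=
  let s := p.1 in let x := p.2 in
  (s, [tuple
        Rintegral mu setT (fun z : R * d.-tuple R =>
          expR (vdot (mxapp A x) z.2) * tnth (mxapp V z.2) i * (if z.1 <= s then 1 else 0)) /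
        Rintegral mu setT (fun z : R * d.-tuple R =>
          expR (vdot (mxapp A x) z.2) * (if z.1 <= s then 1 else 0))
      | i < k]).

Definition Fm {d k} (A : 'M[R]_d) (V : 'M[R]_(k, d))
    (mu : probability (R * d.-tuple R)%type R) : set (R * k.-tuple R)%type -> \bar R :=
  pushforward mu (Gamma A V mu).

Definition Wp {d} (p : R) (mu nu : set (d.-tuple R) -> \bar R) : \bar R :=
  poweR (ereal_inf [set c | exists gam : probability (d.-tuple R * d.-tuple R)%type R,
    [/\ (forall B, measurable B -> gam (B `*` setT) = mu B),
        (forall B, measurable B -> gam (setT `*` B) = nu B) &
        c = (\int[gam]_z ((vnorm (vsub z.1 z.2)) `^ p)%:E)%E]]) p^-1.

(* mu(tau,x) = theta(tau) mu^tau(x): disintegration of mu w.r.t. theta *)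
Definition disintegration {d} (mu : set (R * d.-tuple R)%type -> \bar R)
    (theta : probability R R) (muk : R -> probability (d.-tuple R) R) : Prop :=
  (forall B, measurable B -> measurable_fun [set: R] ((fun t : R => muk t B) : R -> \bar R)) /\
  (forall A B, measurable A -> measurable B ->
     mu (A `*` B) = (\int[theta]_(t in A) muk t B)%E).

(* d_p: +oo when there is no common first marginal (ereal_inf set0 = +oo) *)
Definition dp {d} (p : R) (mu nu : set (R * d.-tuple R)%type -> \bar R) : \bar R :=
  ereal_inf [set c | exists (theta : probability R R)
                           (muk nuk : R -> probability (d.-tuple R) R),
    [/\ disintegration mu theta muk, disintegration nu theta nuk &
        c = poweR (\int[theta]_t poweR (Wp p (muk t) (nuk t)) p)%E p^-1]].

Definition same_first_marginal {d} (mu nu : set (R * d.-tuple R)%type -> \bar R) :=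
  forall A, measurable A -> mu (A `*` setT) = nu (A `*` setT).

Definition Lip_dp {d k} (p : R)
    (F : probability (R * d.-tuple R)%type R -> set (R * k.-tuple R)%type -> \bar R)
    (S : set (probability (R * d.-tuple R)%type R)) : \bar R :=
  ereal_sup [set z | exists mu nu : probability (R * d.-tuple R)%type R,
    [/\ S mu, S nu, (mu : set _ -> \bar R) <> nu, same_first_marginal mu nu &
        z = (dp p (F mu) (F nu) * (dp p mu nu)^-1)%E]].

Definition Psupp {d} (r : R) : set (probability (R * d.-tuple R)%type R) :=
  [set mu | mu (~` ([set t : R | 0 <= t <= 1] `*` cball r)) = 0%E].

End Defs.

(* Main.v *)
Require Import Defs.
From HB Require Import structures.
From mathcomp Require Import all_boot all_order all_algebra.
From mathcomp Require Import all_classical all_reals all_analysis measurable_realfun.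
From mathcomp Require Import ring.
Import Order.TTheory GRing.Theory Num.Theory.
Local Open Scope classical_set_scope.
Local Open Scope ring_scope.
Section Emp.
Context {dT} {T : measurableType dT} {R : realType}.
Variables (m : nat) (p : 'I_m.+1 -> T).
Definition empw : {nonneg R} := (((m.+1)%:R : R)^-1)%:nng.
Local Open Scope ereal_scope.

Definition emp (A : set T) : \bar R := (empw%:num)%:E * \sum_(i < m.+1) \d_(p i) A.

Lemma empE : emp = mscale empw (msum (fun k : nat => \d_(p (inord k))) m.+1).
Proof.
apply/funext => A; rewrite /emp /mscale /msum; congr (_ * _).
by apply: eq_bigr => i _; rewrite inord_val.
Qed.

Let emp0 : emp set0 = 0. Proof. by rewrite empE measure0. Qed.
Let emp_ge0 B : 0 <= emp B. Proof. by rewrite empE measure_ge0. Qed.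
Let emp_sa : semi_sigma_additive emp.
Proof. rewrite empE; exact: measure_semi_sigma_additive. Qed.

HB.instance Definition _ := isMeasure.Build _ _ _ emp emp0 emp_ge0 emp_sa.

Let empT : emp setT = 1.
Proof.
rewrite /emp (eq_bigr (fun _ => 1)); last by move=> i _; rewrite diracE mem_set.
rewrite sumEFin /= sumr_const card_ord -EFinM /=.
by rewrite mulVf.
Qed.

HB.instance Definition _ := Measure_isProbability.Build _ _ _ emp empT.

Lemma int_emp (f : T -> \bar R) : measurable_fun setT f -> (forall x, 0 <= f x) ->
  \int[emp]_x f x = (empw%:num)%:E * \sum_(i < m.+1) f (p i).
Proof.
move=> mf f0.
rewrite (eq_measure_integral (mscale empw (msum (fun k : nat => \d_(p (inord k))) m.+1))); last first.
  by move=> A _ _; exact: (congr1 (fun g => g A) empE).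
rewrite ge0_integral_mscale //; congr (_ * _).
rewrite ge0_integral_measure_sum //.
apply: eq_bigr => i _; rewrite integral_dirac // diracE mem_set // mul1e.
by rewrite inord_val.
Qed.

End Emp.
Arguments emp {dT T R m} p.
Section EmpR.
Context {dT} {T : measurableType dT} {R : realType}.
Variables (m : nat) (p : 'I_m.+1 -> T).
Local Open Scope ereal_scope.

Lemma int_emp_real (f : T -> R) : measurable_fun setT f ->
  \int[emp p]_x (f x)%:E = ((empw m)%:num * \sum_(i < m.+1) f (p i))%:E.
Proof.
move=> mf.
have mF : measurable_fun setT (fun x => (f x)%:E) by exact/measurable_EFinP.
rewrite integralE.
rewrite int_emp //; last exact: measurable_funepos.
rewrite int_emp //; last exact: measurable_funeneg.
have hp x : (fun x => (f x)%:E)^\+ x = (Num.max (f x) 0%R)%:E.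
  by rewrite funeposE /= EFin_max.
have hn x : (fun x => (f x)%:E)^\- x = (Num.max (- f x) 0%R)%:E.
  by rewrite funenegE /= EFin_max.
under eq_bigr do rewrite hp.
under [X in _ - _ * X]eq_bigr do rewrite hn.
rewrite !sumEFin -!EFinM -EFinB -mulrBr -sumrB; congr ((_ * _)%:E).
apply: eq_bigr => i _.
have [h|h] := leP 0%R (f (p i)).
  by rewrite max_r ?subr0 // oppr_le0.
by rewrite max_l ?sub0r ?opprK // oppr_ge0 ltW.
Qed.

End EmpR.
Lemma diracX1 {d1 d2} {T1 : measurableType d1} {T2 : measurableType d2} {R : realType}
  (a : T1) (b : T2) (B : set T1) :
  (\d_(a, b) (B `*` setT) = \d_a B :> \bar R).
Proof.
rewrite !diracE; have [aB|aB] := boolP (a \in B).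
  by rewrite mem_set //; split => //; exact/set_mem.
by rewrite memNset // => -[/mem_set]; rewrite (negbTE aB).
Qed.

Lemma diracX2 {d1 d2} {T1 : measurableType d1} {T2 : measurableType d2} {R : realType}
  (a : T1) (b : T2) (B : set T2) :
  (\d_(a, b) (setT `*` B) = \d_b B :> \bar R).
Proof.
rewrite !diracE; have [aB|aB] := boolP (b \in B).
  by rewrite mem_set //; split => //; exact/set_mem.
by rewrite memNset // => -[_ /mem_set]; rewrite (negbTE aB).
Qed.

Section WpSec.
Context {R : realType} {d : nat}.
Local Notation tup := (d.-tuple R).

Lemma mtset1 (a : tup) : measurable [set a].
Proof.
have -> : [set a] = \bigcap_(i in [set: 'I_d])
    ((fun x : tup => tnth x i) @^-1` [set tnth a i]).
  apply/seteqP; split => x /=.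
  - by move=> -> i _.
  - by move=> H; apply: eq_from_tnth => i; exact: H i I.
apply: fin_bigcap_measurable; first exact: finite_finset.
move=> i _; rewrite -[X in measurable X]setTI.
by apply: measurable_tnth => //; exact: measurable_set1.
Qed.

Lemma vdot_ge0 (x : tup) : 0 <= vdot x x.
Proof. by rewrite /vdot; apply: sumr_ge0 => i _; exact: sqr_ge0. Qed.

Lemma vnorm_ge0 (x : tup) : 0 <= vnorm x.
Proof. exact: sqrtr_ge0. Qed.

Lemma vnorm2 (x : tup) : vnorm x `^ 2 = vdot x x.
Proof.
rewrite -[2]/(2%:R) powR_mulrn ?vnorm_ge0 //.
by rewrite /vnorm sqr_sqrtr // vdot_ge0.
Qed.

Lemma measurable_vdot_sub {dT} {T : measurableType dT} (f g : T -> tup) :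
  measurable_fun setT f -> measurable_fun setT g ->
  measurable_fun setT (fun z => vdot (vsub (f z) (g z)) (vsub (f z) (g z))).
Proof.
move=> mf mg; rewrite /vdot.
under eq_fun do under eq_bigr do rewrite tnth_mktuple.
apply: measurable_sum => i.
have mi : measurable_fun setT (fun z => tnth (f z) i - tnth (g z) i).
  by apply: measurable_funB; apply: measurableT_comp (measurable_tnth i) _.
exact: measurable_funM.
Qed.

Lemma Wp_dirac (mu nu : set tup -> \bar R) (a b : tup) :
  (forall B, measurable B -> mu B = \d_a B) ->
  (forall B, measurable B -> nu B = \d_b B) ->
  Wp 2 mu nu = (vnorm (vsub a b))%:E.
Proof.
move=> hmu hnu.
have mh : measurable_fun setT (fun z : tup * tup => ((vnorm (vsub z.1 z.2)) `^ 2)%:E).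
  apply/measurable_EFinP.
  under eq_fun do rewrite vnorm2.
  exact: measurable_vdot_sub.
have key : forall gam : probability (tup * tup)%type R,
    (forall B, measurable B -> gam (B `*` setT) = mu B) ->
    (forall B, measurable B -> gam (setT `*` B) = nu B) ->
    (\int[gam]_z ((vnorm (vsub z.1 z.2)) `^ 2)%:E =
     ((vnorm (vsub a b)) `^ 2)%:E)%E.
  move=> gam h1 h2.
  have mab : measurable [set (a, b)].
    rewrite (_ : [set (a, b)] = [set a] `*` [set b]); last first.
      by apply/seteqP; split => -[x y] /=; [case=> -> -> | case=> -> ->].
    by apply: measurableX; exact: mtset1.
  have g0 : gam (~` [set (a, b)]) = 0%E.
    apply/eqP; rewrite eq_le measure_ge0 andbT.
    have mA : measurable (~` [set a] `*` [set: tup]).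
      by apply: measurableX => //; apply: measurableC; exact: mtset1.
    have mB : measurable ([set: tup] `*` ~` [set b]).
      by apply: measurableX => //; apply: measurableC; exact: mtset1.
    apply: (@le_trans _ _ (gam (~` [set a] `*` [set: tup] `|` [set: tup] `*` ~` [set b]))).
      apply: le_measure; rewrite ?inE //; first exact: measurableC.
        exact: measurableU.
      move=> [x y] /= nxy; have [xa|xa] := pselect (x = a).
        by right; split=> // yb; apply: nxy; rewrite xa yb.
      by left.
    apply: le_trans (measureU2 _ mA mB) _.
    have E1 : gam (~` [set a] `*` [set: tup]) = mu (~` [set a]) :=
      h1 _ (measurableC (mtset1 a)).
    have E2 : gam ([set: tup] `*` ~` [set b]) = nu (~` [set b]) :=
      h2 _ (measurableC (mtset1 b)).
    apply: (@le_trans _ _ (mu (~` [set a]) + nu (~` [set b]))%E).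
      by rewrite le_eqVlt; apply/orP; left; apply/eqP; congr (_ + _)%E; [exact: E1|exact: E2].
    rewrite hmu ?hnu; try (apply: measurableC; exact: mtset1).
    by rewrite !diracE !memNset //= adde0.
  rewrite (eq_measure_integral (\d_(a, b) : {measure set (tup * tup)%type -> \bar R})); last first.
    move=> S mS _ /=.
    have [abS|abS] := boolP ((a, b) \in S).
      rewrite diracE abS; apply/eqP; rewrite eq_le; apply/andP; split.
        by rewrite -(probability_setT gam); apply: le_measure; rewrite ?inE.
      have : gam (~` S) = 0%E.
        apply/eqP; rewrite eq_le measure_ge0 andbT -g0.
        apply: le_measure; rewrite ?inE; [exact: measurableC|exact: measurableC|].
        by move=> z nz zab; apply: nz; rewrite zab; exact/set_mem.
      by rewrite probability_setC // => H; rewrite -sube_le0 H.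
    rewrite diracE (negbTE abS) (_ : (false%:R)%:E = 0%E) //; apply/eqP; rewrite eq_le measure_ge0 andbT -g0.
    apply: le_measure; rewrite ?inE //; first exact: measurableC.
    by move=> z zS zab; move: abS; rewrite -zab => /negP; apply; exact/mem_set.
  by rewrite integral_dirac // diracE mem_set // mul1e.
rewrite /Wp.
rewrite (_ : [set c | _] = [set ((vnorm (vsub a b)) `^ 2)%:E]); last first.
  apply/seteqP; split => c /=.
  - by move=> [gam [h1 h2 ->]]; exact: key.
  - move=> ->; exists (\d_(a, b) : probability (tup * tup)%type R); split.
    + by move=> B mB; rewrite hmu //; exact: diracX1.
    + by move=> B mB; rewrite hnu //; exact: diracX2.
    + by rewrite key // => B mB; [rewrite hmu //; exact: diracX1|rewrite hnu //; exact: diracX2].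
rewrite ereal_inf1 poweR_EFin -powRrM mulfV // powRr1 //; exact: vnorm_ge0.
Qed.

End WpSec.
Lemma ge0_le_integralT_nm {dT} {T : measurableType dT} {R : realType}
  (mu : {measure set T -> \bar R}) (f g : T -> \bar R) :
  (forall x, (0 <= f x)%E) -> (forall x, (f x <= g x)%E) ->
  (\int[mu]_x f x <= \int[mu]_x g x)%E.
Proof.
move=> f0 fg; have g0 x : (0 <= g x)%E := le_trans (f0 x) (fg x).
rewrite !ge0_integralE //= !patch_setT.
apply: ge_ereal_sup => _ [h hf <-]; apply: ereal_sup_ubound; exists h => //.
by move=> x; apply: le_trans (hf x) (fg x).
Qed.
Section Times.
Context {R : realType} (m : nat).
Definition st (i : 'I_m.+1) : R := (i%:R / m.+1%:R).

Lemma st_le (i j : 'I_m.+1) : (st j <= st i) = (j <= i)%N.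
Proof. by rewrite /st ler_pM2r ?invr_gt0 ?ltr0n // ler_nat. Qed.

Lemma st_inj : injective st.
Proof.
move=> i j h; apply/val_inj/eqP; rewrite eqn_leq -!st_le h.
by rewrite !lexx.
Qed.

Lemma st_01 (i : 'I_m.+1) : 0 <= st i <= 1.
Proof.
rewrite /st divr_ge0 ?ler0n //= ler_pdivrMr ?ltr0n // mul1r ler_nat.
exact: ltnW.
Qed.

Lemma empw_gt0 : (0 < (empw m)%:num :> R).
Proof. by rewrite /= invr_gt0 ltr0n. Qed.

Lemma sum_ind_st (i : 'I_m.+1) (c : 'I_m.+1 -> R) :
  \sum_(j < m.+1) \1_[set st j] (st i) * c j = c i.
Proof.
rewrite (bigD1 i) //= big1 ?addr0; first by rewrite indicE mem_set // mul1r.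
move=> j ji; rewrite indicE memNset ?mul0r //= => h; move/eqP: ji; apply.
exact: st_inj.
Qed.

Lemma emp_st1 (i : 'I_m.+1) : emp st [set st i] = ((empw m)%:num)%:E :> \bar R.
Proof.
rewrite /emp (bigD1 i) //= big1 ?adde0.
  by rewrite diracE mem_set // mule1.
move=> j ji; rewrite diracE memNset //= => h; move/eqP: ji; apply.
exact: st_inj.
Qed.

End Times.
Section DpBounds.
Context {R : realType} (m dd : nat).
Local Notation tup := (dd.-tuple R).

Definition stup (x : 'I_m.+1 -> tup) (t : R) : tup :=
  [tuple \sum_(i < m.+1) \1_[set st m i] t * tnth (x i) j | j < dd].

Lemma stup_st x i : stup x (st m i) = x i.
Proof.
apply: eq_from_tnth => j; rewrite tnth_mktuple.

exact: (sum_ind_st m i (fun i0 => tnth (x i0) j)).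
Qed.

Lemma measurable_stup x : measurable_fun setT (stup x).
Proof.
apply/measurable_fun_tnthP => j /=.
rewrite (_ : _ \o _ = fun t => \sum_(i < m.+1) \1_[set st m i] t * tnth (x i) j);
  last by apply/funext => t /=; rewrite tnth_mktuple.
by apply: measurable_sum => i; apply: measurable_funM => //.
Qed.

Definition pdir (a : tup) : probability tup R := \d_a.

Lemma pdirE (a : tup) B : pdir a B = ((a \in B)%:R)%:E.
Proof. exact: diracE. Qed.

Lemma disint_emp x :
  disintegration (emp (fun i => (st m i, x i)))
                 (emp (st m)) (fun t => pdir (stup x t)).
Proof.
split.
- move=> B mB.
  rewrite (_ : (fun t => _) = EFin \o (\1_B \o stup x)); last first.
    by apply/funext => t /=; rewrite pdirE indicE.
  apply/measurable_EFinP; apply: measurableT_comp; last exact: measurable_stup.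
  exact: measurable_indic.
- move=> A B mA mB.
  rewrite integral_mkcond int_emp; first last.
  + by move=> t; rewrite /patch; case: ifP => // _; exact: measure_ge0.
  + apply/(measurable_restrictT _ _).1 => //.
    rewrite (_ : (fun t => _) = EFin \o (\1_B \o stup x)); last first.
      by apply/funext => t /=; rewrite pdirE indicE.
    apply/measurable_funTS/measurable_EFinP; apply: measurableT_comp; last exact: measurable_stup.
    exact: measurable_indic.
  rewrite /emp; congr (_ * _)%E; apply: eq_bigr => i _.
  rewrite /patch stup_st.
  have [iA|iA] := boolP (st m i \in A).
    rewrite diracE pdirE; congr ((nat_of_bool _)%:R%:E); apply/idP/idP.
    - by move=> /set_mem [] _ h; exact/mem_set.
    - by move=> /set_mem h; apply/mem_set; split => //; exact/set_mem.
  by rewrite diracE memNset // => -[/mem_set]; rewrite (negbTE iA).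
Qed.

Lemma Wp_pdir (a b : tup) : Wp 2 (pdir a) (pdir b) = (vnorm (vsub a b))%:E.
Proof. by apply: Wp_dirac. Qed.

Lemma dp_up (x y : 'I_m.+1 -> tup) :
  (dp 2 (emp (fun i => (st m i, x i))) (emp (fun i => (st m i, y i))) <=
   (Num.sqrt ((empw m)%:num * \sum_(i < m.+1) vdot (vsub (x i) (y i)) (vsub (x i) (y i))))%:E)%E.
Proof.
apply: ereal_inf_lbound.
exists (emp (st m)), (fun t => pdir (stup x t)), (fun t => pdir (stup y t)).
split; [exact: disint_emp | exact: disint_emp |].
under eq_integral do rewrite Wp_pdir poweR_EFin vnorm2.
rewrite int_emp_real; last first.
  by apply: measurable_vdot_sub; exact: measurable_stup.
rewrite poweR_EFin powR12_sqrt; last first.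
  by rewrite mulr_ge0 // sumr_ge0 // => i _; exact: vdot_ge0.
congr ((Num.sqrt (_ * _))%:E); apply: eq_bigr => i _.
by congr (vdot (vsub _ _) (vsub _ _)); symmetry; apply: stup_st.
Qed.

End DpBounds.
Lemma cancel_wE {R : realType} (a b : \bar R) (w : R) : 0 < w ->
  (w%:E * a = w%:E * b)%E -> a = b.
Proof.
move=> w0 h.
have e : ((w^-1)%:E * w%:E = 1 :> \bar R)%E by rewrite -EFinM mulVf // gt_eqF.
by rewrite -[a]mul1e -[b]mul1e -e -!muleA h.
Qed.

Section DpLow.
Context {R : realType} (m dd : nat).
Local Notation tup := (dd.-tuple R).

Lemma emp_X1 (f : 'I_m.+1 -> tup) (A : set R) :
  emp (fun i => (@st R m i, f i)) (A `*` setT) = emp (st m) A :> \bar R.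
Proof.
rewrite /emp; congr (_ * _)%E; apply: eq_bigr => i _; exact: diracX1.
Qed.

Lemma emp_set1X (f : 'I_m.+1 -> tup) (i : 'I_m.+1) (B : set tup) :
  emp (fun i => (@st R m i, f i)) ([set st m i] `*` B) = ((((empw m)%:num : R)%:E) * (\d_(f i) B : \bar R))%E.
Proof.
rewrite /emp (bigD1 i) //= big1 ?adde0 //.
  rewrite !diracE; congr (_ * _)%E; congr ((nat_of_bool _)%:R%:E); apply/idP/idP.
  - by move=> /set_mem [] _ h; exact/mem_set.
  - by move=> /set_mem h; apply/mem_set; split => //; exact/set_mem.
move=> j ji; rewrite diracE memNset //= => -[h _]; move/eqP: ji; apply.
exact: (@st_inj R m _ _ h).
Qed.

Lemma disint_facts (f : 'I_m.+1 -> tup) (theta : probability R R)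
    (muk : R -> probability tup R) :
  disintegration (emp (fun i => (@st R m i, f i))) theta muk ->
  (forall A, measurable A -> theta A = emp (st m) A) /\
  (forall i B, measurable B -> muk (st m i) B = \d_(f i) B).
Proof.
move=> [Dm Dp].
have hth : forall A, measurable A -> theta A = emp (st m) A.
  move=> A mA; rewrite -(emp_X1 f A) Dp //.
  rewrite (eq_integral (cst 1%E)); last by move=> t _; rewrite probability_setT.
  by rewrite integral_cst // mul1e.
split => // i B mB.
have := Dp _ _ (measurable_set1 (st m i)) mB.
rewrite emp_set1X.
rewrite (eq_integral (cst (muk (st m i) B))); last by move=> t /set_mem /= ->.
rewrite integral_cst; last exact: measurable_set1.
have e : (theta : {measure set R -> \bar R}) [set st m i] = emp (@st R m) [set st m i].
  exact (hth _ (measurable_set1 (st m i))).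
rewrite e.
rewrite emp_st1 => h.
apply: (@cancel_wE R _ _ ((empw m)%:num) (empw_gt0 m)).
by rewrite muleC; exact: (esym h).
Qed.

Lemma dp_low (f g : 'I_m.+1 -> tup) :
  ((Num.sqrt ((empw m)%:num * \sum_(i < m.+1) vdot (vsub (f i) (g i)) (vsub (f i) (g i))))%:E <=
   dp 2 (emp (fun i => (@st R m i, f i))) (emp (fun i => (@st R m i, g i))))%E.
Proof.
apply: le_ereal_inf_tmp => _ [theta [muk [nuk [D1 D2 ->]]]].
have [hth hmu] := @disint_facts f theta muk D1.
have [_ hnu] := @disint_facts g theta nuk D2.
pose v i := vdot (vsub (f i) (g i)) (vsub (f i) (g i)).
pose G t := ((Wp 2 (muk t) (nuk t)) `^ 2)%E.
pose H (t : R) := (\sum_(i < m.+1) \1_[set @st R m i] t * v i)%:E.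
have G0 t : (0 <= G t)%E by exact: poweR_ge0.
have Gst i : G (st m i) = (v i)%:E.
  rewrite /G (@Wp_dirac R dd _ _ (f i) (g i)) ?poweR_EFin ?vnorm2 //.
  - by move=> B mB; exact: hmu.
  - by move=> B mB; exact: hnu.
have H0 t : (0 <= H t)%E.
  by rewrite lee_fin sumr_ge0 // => i _; rewrite mulr_ge0 // ?vdot_ge0 // indicE ler0n.
have HG t : (H t <= G t)%E.
  have [[i ->]|nt] := pselect (exists i, t = st m i).
    by rewrite /H sum_ind_st Gst.
  rewrite /H big1 //; move=> i _; rewrite indicE memNset ?mul0r //= => ti.
  by apply: nt; exists i.
have mH : measurable_fun setT (fun t : R => \sum_(i < m.+1) \1_[set @st R m i] t * v i).
  by apply: measurable_sum => i; apply: measurable_funM => //.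
have intH : (\int[theta]_t H t = ((empw m)%:num * \sum_(i < m.+1) v i)%:E)%E.
  rewrite (eq_measure_integral (emp (st m))); last by move=> A mA _; exact: hth.
  rewrite int_emp_real //; congr ((_ * _)%:E); apply: eq_bigr => i _.
  exact: sum_ind_st.
have le1 : (((empw m)%:num * \sum_(i < m.+1) v i)%:E <= \int[theta]_t G t)%E.
  rewrite -intH; exact: ge0_le_integralT_nm.
have w0 : 0 <= (empw m)%:num * \sum_(i < m.+1) v i.
  by rewrite mulr_ge0 // sumr_ge0 // => i _; exact: vdot_ge0.
rewrite -powR12_sqrt // -poweR_EFin.
apply: gt0_ler_poweR => //.
- by rewrite in_itv /= lee_fin w0 leey.
- by rewrite in_itv /= leey andbT; apply: integral_ge0 => t _; exact: G0.
Qed.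

End DpLow.
Section Attn.
Context {R : realType} (m d k : nat) (A : 'M[R]_d) (V : 'M[R]_(k, d)).
Local Notation tup := (d.-tuple R).
Local Notation T := (R * d.-tuple R)%type.

Lemma meas_vdot_snd (u : tup) : measurable_fun setT (fun z : T => vdot u z.2).
Proof.
rewrite /vdot; apply: measurable_sum => l; apply: measurable_funM => //.
exact: measurableT_comp (measurable_tnth l) measurable_snd.
Qed.

Lemma meas_mxapp_snd c : measurable_fun setT (fun z : T => tnth (mxapp V z.2) c).
Proof.
under eq_fun do rewrite tnth_mktuple.
apply: measurable_sum => l; apply: measurable_funM => //.
exact: measurableT_comp (measurable_tnth l) measurable_snd.
Qed.

Lemma meas_le_fst (s : R) :
  measurable_fun setT (fun z : T => (if z.1 <= s then 1 else 0 : R)).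
Proof.
rewrite (_ : (fun z : T => _) = \1_(`]-oo, s]) \o fst); last first.
  apply/funext => z /=; rewrite indicE; case: leP => h.
  - by rewrite mem_set //= in_itv /= h.
  - by rewrite memNset //= in_itv /= leNgt h.
apply: measurableT_comp => //; exact: measurable_indic.
Qed.

Lemma meas_exp_vdot (u : tup) :
  measurable_fun setT (fun z : T => expR (vdot u z.2)).
Proof.
rewrite (_ : (fun z : T => _) = expR \o (fun z : T => vdot u z.2)) //.
apply: measurableT_comp; [exact: measurable_expR | exact: meas_vdot_snd].
Qed.

End Attn.
Section Attn2.
Context {R : realType} (m d k : nat) (A : 'M[R]_d) (V : 'M[R]_(k, d)).
Local Notation tup := (d.-tuple R).
Local Notation T := (R * d.-tuple R)%type.

Lemma Rint_emp {dT} {T' : measurableType dT} (p : 'I_m.+1 -> T') (f : T' -> R) :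
  measurable_fun setT f ->
  Rintegral (emp p) setT f = (empw m)%:num * \sum_(i < m.+1) f (p i).
Proof. by move=> mf; rewrite /Rintegral int_emp_real. Qed.

Lemma Gamma_emp (X : 'I_m.+1 -> tup) (i : 'I_m.+1) :
  Gamma A V (emp (fun j => (@st R m j, X j))) (st m i, X i) =
  (st m i, masked_sa A V X i).
Proof.
rewrite /Gamma /=; congr (_, _); apply: eq_from_tnth => c; rewrite !tnth_mktuple.
rewrite !Rint_emp; first last.
- apply: measurable_funM; last exact: (@meas_le_fst R d _).
  apply: measurable_funM; last exact: (@meas_mxapp_snd R d k V _).
  exact: (@meas_exp_vdot R d _).
- apply: measurable_funM; last exact: (@meas_le_fst R d _).
  exact: (@meas_exp_vdot R d _).
rewrite /=.
pose e j := expR (vdot (mxapp A (X i)) (X j)).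
pose E := \sum_(l < m.+1 | (l <= i)%N) e l.
have hnum : \sum_(j < m.+1) e j * tnth (mxapp V (X j)) c *
              (if @st R m j <= @st R m i then 1 else 0) =
            \sum_(j < m.+1 | (j <= i)%N) e j * tnth (mxapp V (X j)) c.
  rewrite [RHS]big_mkcond; apply: eq_bigr => j _; rewrite st_le.
  by case: ifP; rewrite ?mulr1 ?mulr0.
have hden : \sum_(j < m.+1) e j * (if @st R m j <= @st R m i then 1 else 0) = E.
  rewrite /E [RHS]big_mkcond; apply: eq_bigr => j _; rewrite st_le.
  by case: ifP; rewrite ?mulr1 ?mulr0.
rewrite hnum hden -mulf_div divff ?mul1r; last exact: lt0r_neq0 (empw_gt0 m).
under [RHS]eq_bigr do rewrite tnth_mktuple mulr_sumr.
rewrite exchange_big /= mulr_suml; apply: eq_bigr => j _.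
rewrite tnth_mktuple mulr_sumr mulr_suml; apply: eq_bigr => l _.
rewrite /mask_weight -/(e j).
rewrite (_ : \sum_(l0 < m.+1 | (l0 <= i)%N) expR (vdot (mxapp A (X i)) (X l0)) = E) //.
by ring.
Qed.

End Attn2.
Lemma vdot_sub_gt0 {R : realType} {d : nat} (x y : d.-tuple R) :
  x <> y -> 0 < vdot (vsub x y) (vsub x y).
Proof.
move=> nxy; rewrite lt_def vdot_ge0 andbT; apply/negP => /eqP h.
apply: nxy; apply: eq_from_tnth => j.
move: h; rewrite /vdot => /psumr_eq0P h.
have := h (fun i _ => sqr_ge0 _) j isT.
by rewrite tnth_mktuple -expr2 => /eqP; rewrite sqrf_eq0 subr_eq0 => /eqP.
Qed.

Section Final.
Context {R : realType} (m d k : nat) (A : 'M[R]_d) (V : 'M[R]_(k, d)).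
Local Notation tup := (d.-tuple R).

Lemma Fm_emp (X : 'I_m.+1 -> tup) :
  Fm A V (emp (fun j => (@st R m j, X j))) =
  emp (fun i => (@st R m i, masked_sa A V X i)).
Proof.
apply/funext => B; rewrite /Fm /pushforward /emp; congr (_ * _)%E.
by apply: eq_bigr => i _; rewrite !diracE -Gamma_emp; congr ((nat_of_bool _)%:R%:E).
Qed.

Lemma emp_Psupp (r : R) (X : 'I_m.+1 -> tup) : (forall i, cball r (X i)) ->
  Psupp r (emp (fun j => (@st R m j, X j))).
Proof.
move=> hX; rewrite /Psupp /= /emp big1 ?mule0 // => i _.
rewrite diracE memNset //= => h; apply: h; split; last exact: hX.
exact: st_01.
Qed.

Lemma emp_neq (X Y : 'I_m.+1 -> tup) (i : 'I_m.+1) : X i <> Y i ->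
  (emp (fun j => (@st R m j, X j)) : set _ -> \bar R) <> emp (fun j => (@st R m j, Y j)).
Proof.
move=> hne heq.
have e2 : emp (fun j => (@st R m j, Y j)) [set (@st R m i, X i)] = 0%E :> \bar R.
  rewrite /emp big1 ?mule0 //.
  move=> j _; rewrite diracE memNset //= => -[h1 h2].
  have ji : j = i by exact: (@st_inj R m _ _ h1).
  by apply: hne; rewrite -h2 ji.
have e1 : emp (fun j => (@st R m j, X j)) [set (@st R m i, X i)] = ((empw m)%:num)%:E :> \bar R.
  rewrite /emp (bigD1 i) //= diracE mem_set // big1 ?adde0 ?mule1 //.
  move=> j ji; rewrite diracE memNset //= => -[h1 _]; move/eqP: ji; apply.
  exact: (@st_inj R m _ _ h1).
have := congr1 (fun f => f [set (@st R m i, X i)]) heq; rewrite /= e1 e2.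
move=> /eqP; rewrite eqe; apply/negP.
exact: lt0r_neq0 (empw_gt0 m).
Qed.

Lemma emp_sfm (X Y : 'I_m.+1 -> tup) :
  same_first_marginal (emp (fun j => (@st R m j, X j))) (emp (fun j => (@st R m j, Y j))).
Proof.
move=> B mB; transitivity (emp (@st R m) B : \bar R); first exact: emp_X1.
symmetry; exact: emp_X1.
Qed.

End Final.
Theorem mainTheorem9 (R : realType) (r : R) (n d k : nat) (Q K V : 'M[R]_(k, d)) :
  0 < r ->
  (Lip_frob (@masked_sa R n d k (attnA Q K) V) [set X | forall i, cball r (X i)]
   <= Lip_dp 2 (Fm (attnA Q K) V) (Psupp r))%E.
Proof.
move=> r0; rewrite /Lip_frob.
apply: ge_ereal_sup => _ [X [Y [hX hY hXY ->]]].
have [i0 hi0] : exists i, X i <> Y i.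
  apply: contra_notP hXY => H; apply/funext => i.
  by apply: contra_notP H => h; exists i.
case: n X Y hX hY hXY i0 hi0 => [|m] X Y hX hY hXY i0 hi0; first by case: i0 hi0.
set Am := attnA Q K.
pose muX : probability (R * d.-tuple R)%type R := emp (fun j => (@st R m j, X j)).
pose muY : probability (R * d.-tuple R)%type R := emp (fun j => (@st R m j, Y j)).
pose w := (empw m)%:num : R.
pose SX := \sum_(i < m.+1) vdot (vsub (X i) (Y i)) (vsub (X i) (Y i)).
pose Sf := \sum_(i < m.+1) vdot (vsub (masked_sa Am V X i) (masked_sa Am V Y i))
                                (vsub (masked_sa Am V X i) (masked_sa Am V Y i)).
have w0 : 0 < w by exact: empw_gt0.
have SX0 : 0 < SX.
  rewrite /SX (bigD1 i0) //=; have := @vdot_sub_gt0 R d _ _ hi0 => h.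
  apply: (lt_le_trans h); rewrite lerDl; apply: sumr_ge0 => i _; exact: vdot_ge0.
have b0 : 0 < Num.sqrt (w * SX) by rewrite sqrtr_gt0 mulr_gt0.
have hU : dp 2 muX muY = (Num.sqrt (w * SX))%:E.
  by apply/le_anti; rewrite dp_up dp_low.
have hL : ((Num.sqrt (w * Sf))%:E <= dp 2 (Fm Am V muX) (Fm Am V muY))%E.
  by rewrite /muX /muY !Fm_emp; exact: dp_low.
apply: (@le_trans _ _ (dp 2 (Fm Am V muX) (Fm Am V muY) * (dp 2 muX muY)^-1)%E); last first.
  apply: ereal_sup_ubound; exists muX, muY; split => //.
  - exact: emp_Psupp.
  - exact: emp_Psupp.
  - exact: emp_neq hi0.
rewrite hU inver gt_eqF //.
rewrite /frob -/SX -/Sf.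
have ew : Num.sqrt w != 0 by rewrite gt_eqF // sqrtr_gt0.
have -> : Num.sqrt Sf / Num.sqrt SX = Num.sqrt (w * Sf) / Num.sqrt (w * SX).
  by rewrite !sqrtrM ?ltW // -mulf_div divff ?mul1r.
by rewrite EFinM; apply: lee_wpmul2r => //.
Qed.
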